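(* Let $B$ be a finite block size, $c\ge1$ an integer, $\gamma\in(0,1]$, and $k,k'$ positive integers with $k+k'=B$ and $1\le k'\le\lfloor \gamma k/c\rfloor$. The burning second-price auction with parameters $(B,c,\gamma,k,k')$ satisfies UIC, MIC and $c$-SCP under $\gamma$-strict utility.
   Context: Setting (TFM). Users $i$ have true values $v_i\ge0$ and submit single bids $b_i\ge0$. A block holds at most $B$ transactions. A TFM has an inclusion rule (run by the miner, selecting at most $B$ bids), and confirmation, payment and miner-revenue rules (run by the blockchain on the included bids, possibly using trusted on-chain randomness revealed after inclusion); confirmed bids pay at most their bid, unconfirmed bids pay $0$, the miner receives at most the total payment and the rest is burnt. Burning second-price auction with parameters $(B,c,\gamma,k,k')$: Inclusion: include the $B$ highest bids (ties broken arbitrarily), denoted $b_1\ge\dots\ge b_B$; empty slots count as bids of $0$. Confirmation: using on-chain randomness choose a uniformly random subset $S\subseteq\{b_1,\dots,b_k\}$ of size exactly $\lfloor\gamma k/c\rfloor$; exactly the bids in $S$ are confirmed. Payment: each confirmed bid pays $b_{k+1}$. Miner revenue: $\gamma(b_{k+1}+\dots+b_{k+k'})$; remaining payment is burnt. Strategic players: a single user, the miner, or a coalition of the miner with some users. They may have their users bid untruthfully after seeing all other bids, inject fake bids (true value $0$), and, if the miner is involved, include any set of at most $B$ available bids instead of following the inclusion rule. $\gamma$-strict utility of a player: the miner's revenue (if the miner belongs to the player), plus $v-p$ for each confirmed transaction of the player with true value $v$ and payment $p$, minus $\gamma(b-v)$ for each unconfirmed transaction of the player whose bid $b$ exceeds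 its true value $v$; expected utilities are used. Under $\gamma$-strict utility: UIC — assuming the miner follows the mechanism, each user's expected utility is maximized by truthful bidding without fake bids, whatever the other bids; MIC — the miner's expected utility is maximized by following the inclusion rule without fake bids, whatever the bids; $c$-SCP — for every coalition of the miner with between $1$ and $c$ users, expected joint utility is maximized by truthful bidding and honest miner behavior, whatever the other bids. *)

(* Defs.v *)
From mathcomp Require Import all_boot all_order all_algebra.
From mathcomp Require Import reals.
Unset Printing Implicit Defensive.
Import Order.TTheory GRing.Theory Num.Theory.
Local Open Scope ring_scope.

Section TFM.
Variable R : realType.

(* A transaction: (bid, owner).  owner = None: belongs to someone outside the
   strategic player; owner = Some v: belongs to the strategic player and has
   true value v (fake bids have true value 0). *)
Definition tx := (R * option R)%type.
Definition bidOf (t : tx) : R := t.1.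
Definition tx0 : tx := (0, None).

Definition others_txs (os : seq R) : seq tx := [seq (b, None) | b <- os].

(* vs = true values of the player's real users, bs = their (single) bids,
   fs = injected fake bids (true value 0). *)
Definition player_txs (vs bs fs : seq R) : seq tx :=
  [seq (p.2, Some p.1) | p <- zip vs bs] ++ [seq (f, Some 0) | f <- fs].

Definition all_nonneg (s : seq R) : Prop := forall x, x \in s -> 0 <= x.

Definition valid_block (B : nat) (av I : seq tx) : Prop :=
  exists rest, perm_eq (I ++ rest) av /\ (size I <= B)%N.

Definition honest_inclusion (B : nat) (av I : seq tx) : Prop :=
  exists rest, perm_eq (I ++ rest) av /\ size I = minn B (size av) /\
    (forall x y, x \in I -> y \in rest -> bidOf y <= bidOf x).

Definition arrangement (I L : seq tx) : Prop :=
  perm_eq L I /\ sorted (fun x y : tx => bidOf y <= bidOf x) L.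

(* bid at 0-indexed position i of the block; empty slots count as 0.
   So b_{j} (1-indexed) is bidAt L (j-1). *)
Definition bidAt (L : seq tx) (i : nat) : R := nth 0 (map bidOf L) i.

Definition nconf (c k : nat) (g : R) : nat := Num.truncn (g * k%:R / c%:R).

Definition tx_util (k : nat) (g : R) (L : seq tx) (conf : nat -> bool)
  (i : nat) (t : tx) : R :=
  match t.2 with
  | None => 0
  | Some v => if conf i then v - bidAt L k
              else if v < t.1 then - (g * (t.1 - v)) else 0
  end.

Definition realized_util (miner : bool) (k k' : nat) (g : R) (L : seq tx)
  (S : {set 'I_k}) : R :=
  (if miner then g * \sum_(k <= i < (k + k')%N) bidAt L i else 0) +
  \sum_(i < size L)
     tx_util k g L (fun j => [exists s in S, nat_of_ord s == j]) i (nth tx0 L i).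

Definition conf_sets (k m : nat) : {set {set 'I_k}} := [set S : {set 'I_k} | #|S| == m].

Definition exp_util (miner : bool) (c k k' : nat) (g : R) (L : seq tx) : R :=
  (\sum_(S in conf_sets k (nconf c k g)) realized_util miner k k' g L S)
    / (#|conf_sets k (nconf c k g)|)%:R.

Definition UIC (B c k k' : nat) (g : R) : Prop :=
  forall (os : seq R) (v b : R) (fs : seq R),
    all_nonneg os -> 0 <= v -> 0 <= b -> all_nonneg fs ->
    forall I L I' L',
      honest_inclusion B (others_txs os ++ player_txs [:: v] [:: v] [::]) I ->
      arrangement I L ->
      honest_inclusion B (others_txs os ++ player_txs [:: v] [:: b] fs) I' ->
      arrangement I' L' ->
      exp_util false c k k' g L' <= exp_util false c k k' g L.

Definition MIC (B c k k' : nat) (g : R) : Prop :=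
  forall (os fs : seq R),
    all_nonneg os -> all_nonneg fs ->
    forall I L I' L',
      honest_inclusion B (others_txs os) I -> arrangement I L ->
      valid_block B (others_txs os ++ player_txs [::] [::] fs) I' ->
      arrangement I' L' ->
      exp_util true c k k' g L' <= exp_util true c k k' g L.

Definition SCP (B c k k' : nat) (g : R) : Prop :=
  forall (vs os bs fs : seq R),
    (1 <= size vs <= c)%N -> all_nonneg vs -> all_nonneg os ->
    size bs = size vs -> all_nonneg bs -> all_nonneg fs ->
    forall I L I' L',
      honest_inclusion B (others_txs os ++ player_txs vs vs [::]) I ->
      arrangement I L ->
      valid_block B (others_txs os ++ player_txs vs bs fs) I' ->
      arrangement I' L' ->
      exp_util true c k k' g L' <= exp_util true c k k' g L.

End TFM.

(* Main.v *)
Require Import Defs.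
From mathcomp Require Import all_boot all_order all_algebra all_fingroup.
From mathcomp Require Import reals.
From mathcomp Require Import ring lra zify.
Import Order.TTheory GRing.Theory Num.Theory.
Local Open Scope ring_scope.

Lemma conf_count (k m0 : nat) (i : 'I_k) :
  (k * \sum_(S in conf_sets k m0) (i \in S))%N = (m0 * #|conf_sets k m0|)%N.
Proof.
have sym : forall j : 'I_k, (\sum_(S in conf_sets k m0) (j \in S))%N =
                            (\sum_(S in conf_sets k m0) (i \in S))%N.
  move=> j.
  have hinj : injective (fun S : {set 'I_k} => tperm i j @^-1: S).
    move=> S1 S2 /= e; apply/setP=> x.
    have := congr1 (fun S : {set 'I_k} => tperm i j x \in S) e.
    by rewrite !inE tpermK.
  rewrite (reindex_inj hinj) /=.
  apply: eq_big => S.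
    by rewrite !inE card_preimset //; apply: perm_inj.
  by move=> _; rewrite !inE tpermR.
have -> : (k * \sum_(S in conf_sets k m0) (i \in S))%N =
   (\sum_(j < k) \sum_(S in conf_sets k m0) (j \in S))%N.
  by rewrite (eq_bigr _ (fun j _ => sym j)) sum_nat_const card_ord.
rewrite exchange_big /=.
rewrite (eq_bigr (fun _ => m0)).
  by rewrite sum_nat_const mulnC.
move=> S; rewrite inE => /eqP <-.
by rewrite -sum1_card [RHS]big_mkcond.
Qed.

Lemma mem_zip2 (T1 T2 : eqType) (s1 : seq T1) (s2 : seq T2) p :
  size s1 = size s2 -> p \in zip s1 s2 -> p.2 \in s2.
Proof.
move=> e h; have : p.2 \in unzip2 (zip s1 s2) by apply: map_f.
by rewrite unzip2_zip // e.
Qed.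

Lemma zip_same (T : Type) (s : seq T) : zip s s = map (fun x => (x, x)) s.
Proof. by elim: s => //= x s ->. Qed.

Section Lists.
Context {R : realType}.
Local Notation tx := (tx R).
Local Notation bidAt := (bidAt R).
Local Notation bidOf := (bidOf R).

Definition val (t : tx) : R := match t.2 with None => t.1 | Some v => v end.

Lemma bidAt_nth L i : (i < size L)%N -> bidAt L i = bidOf (nth (tx0 R) L i).
Proof. by move=> h; rewrite /bidAt (nth_map (tx0 R)). Qed.
Lemma bidAt_default L i : (size L <= i)%N -> bidAt L i = 0.
Proof. by move=> h; rewrite /bidAt nth_default ?size_map. Qed.

Lemma arr_mono {I L} : arrangement R I L -> (forall t, t \in L -> 0 <= bidOf t) ->
  forall i j, (i <= j)%N -> bidAt L j <= bidAt L i.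
Proof.
move=> [_ so] nn i j ij.
case: (ltnP j (size L)) => hj.
  have hi : (i < size L)%N by exact: leq_ltn_trans ij hj.
  rewrite (bidAt_nth _ _ hj) (bidAt_nth _ _ hi).
  apply: (sorted_leq_nth _ _ (tx0 R) so) => //.
  move=> y x z /= h1 h2; exact: le_trans h2 h1.
rewrite (bidAt_default _ _ hj).
case: (ltnP i (size L)) => hi; last by rewrite bidAt_default.
rewrite (bidAt_nth _ _ hi); apply: nn; exact: mem_nth.
Qed.

Lemma sum_sub (s1 s2 av : seq tx) (F : tx -> R) : perm_eq (s1 ++ s2) av ->
  (forall t, t \in s2 -> 0 <= F t) -> \sum_(t <- s1) F t <= \sum_(t <- av) F t.
Proof.
move=> p h; rewrite -(perm_big _ p) big_cat /= lerDl big_seq.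
by apply: sumr_ge0 => t; apply: h.
Qed.

Lemma sum_player (F : tx -> R) vs bs fs :
  \sum_(t <- player_txs R vs bs fs) F t =
  \sum_(p <- zip vs bs) F (p.2, Some p.1) + \sum_(f <- fs) F (f, Some 0).
Proof. by rewrite /player_txs big_cat !big_map. Qed.

Lemma sum_zip1 (G : R -> R) (vs bs : seq R) : size bs = size vs ->
  \sum_(p <- zip vs bs) G p.1 = \sum_(v <- vs) G v.
Proof.
move=> h; have e : unzip1 (zip vs bs) = vs by rewrite unzip1_zip // h.
by rewrite -[in RHS]e big_map.
Qed.

Lemma sum_others (F : tx -> R) os :
  \sum_(t <- others_txs R os) F t = \sum_(b <- os) F (b, None).
Proof. by rewrite /others_txs big_map. Qed.

Lemma incl_full B (av I rest : seq tx) : perm_eq (I ++ rest) av ->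
  size I = minn B (size av) -> rest != [::] -> size I = B.
Proof.
move=> p hs hr; have := perm_size p; rewrite size_cat => e.
move: hs; rewrite -e; case: rest {p} hr e => // r rs _ _ /=.
rewrite /minn; case: ltnP => h e; [exact: e | by move/eqP: e; rewrite -{1}[size I]addn0 eqn_add2l].
Qed.

Lemma sum_pad (f : nat -> R) n a : (forall i, (n <= i)%N -> f i = 0) ->
  \sum_(0 <= i < n) f i = \sum_(0 <= i < n + a) f i.
Proof.
move=> h; rewrite (big_cat_nat (leq0n n) (leq_addr a n)) /=.
by rewrite [X in _ = _ + X]big1_seq ?addr0 // => i /andP [_]; rewrite mem_index_iota => /andP [] /h.
Qed.

Lemma sum_range (f : nat -> R) a b T : (b <= T)%N ->
  \sum_(a <= i < b) f i = \sum_(0 <= i < T) (if (a <= i < b)%N then f i else 0).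
Proof.
move=> bT; case: (leqP a b) => ab; last first.
  rewrite big_geq ?(ltnW ab) // big1 // => i _.
  by case: ifP => // /andP [h1 h2]; move: (leq_ltn_trans h1 h2); rewrite ltnNge ltnW.
rewrite [RHS](big_cat_nat (leq0n a) (leq_trans ab bT)) /=.
rewrite [X in _ = _ + X](big_cat_nat ab bT) /=.
have e1 : \sum_(0 <= i < a) (if (a <= i < b)%N then f i else 0) = 0.
  apply: big1_seq => i /andP [_]; rewrite mem_index_iota => /andP [_ h].
  by rewrite leqNgt h.
have e3 : \sum_(b <= i < T) (if (a <= i < b)%N then f i else 0) = 0.
  apply: big1_seq => i /andP [_]; rewrite mem_index_iota => /andP [h _].
  by rewrite ltnNge h andbF.
rewrite e1 e3 add0r addr0 big_seq_cond [RHS]big_seq_cond; apply: eq_bigr => i /andP [].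
by rewrite mem_index_iota => -> _.
Qed.

End Lists.

Section S.
Variable R : realType.
Variables (c k k' : nat) (g : R).
Hypothesis k0 : (0 < k)%N.
Hypothesis mk : (nconf R c k g <= k)%N.

Definition pr : R := (nconf R c k g)%:R / k%:R.

Definition eu (L : seq (tx R)) (i : nat) (t : tx R) : R :=
  if (i < k)%N then pr * tx_util R k g L (fun _ => true) i t
                    + (1 - pr) * tx_util R k g L (fun _ => false) i t
  else tx_util R k g L (fun _ => false) i t.

Lemma tx_util_split L (conf : nat -> bool) i t :
  tx_util R k g L conf i t = if conf i then tx_util R k g L (fun _ => true) i t
                             else tx_util R k g L (fun _ => false) i t.
Proof. by rewrite /tx_util; case: t.2 => [v|]; case: (conf i). Qed.

Lemma N_gt0 : (0 < #|conf_sets k (nconf R c k g)|)%N.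
Proof. by rewrite /conf_sets card_draws card_ord bin_gt0. Qed.

Lemma cnt_lt (i : nat) (hi : (i < k)%N) :
  \sum_(S in conf_sets k (nconf R c k g))
     ([exists s in S, nat_of_ord s == i] : nat)%:R =
  pr * (#|conf_sets k (nconf R c k g)|)%:R :> R.
Proof.
have e : forall S : {set 'I_k}, [exists s in S, nat_of_ord s == i] = (Ordinal hi \in S).
  move=> S; apply/existsP/idP => [[s /andP [sS /eqP si]]|iS].
    by have -> : Ordinal hi = s by apply: val_inj.
  by exists (Ordinal hi); rewrite iS /=.
under eq_bigr => S _ do rewrite e.
rewrite -natr_sum.
have := congr1 (fun n => n%:R : R) (@conf_count k (nconf R c k g) (Ordinal hi)).
rewrite !natrM /pr => h.
have kn0 : (k%:R : R) != 0 by rewrite pnatr_eq0 -lt0n.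
apply: (mulfI kn0); rewrite h; field; done.
Qed.

Lemma cnt_ge (i : nat) (hi : (k <= i)%N) :
  \sum_(S in conf_sets k (nconf R c k g))
     ([exists s in S, nat_of_ord s == i] : nat)%:R = 0 :> R.
Proof.
apply: big1 => S _; case: existsP => // [[s /andP [_ /eqP si]]].
by move: (ltn_ord s); rewrite si ltnNge hi.
Qed.

Lemma sum_if (T : finType) (b : T -> bool) (A : {pred T}) (x y : R) :
  \sum_(S in A) (if b S then x else y) =
  y *+ #|A| + (\sum_(S in A) (b S : nat)%:R) * (x - y).
Proof.
rewrite -sumr_const mulr_suml -big_split /=; apply: eq_bigr => S _.
by case: (b S); rewrite /= ?mul1r ?mul0r; ring.
Qed.

Lemma exp_utilE miner L :
  exp_util R miner c k k' g L =
  (if miner then g * \sum_(k <= i < (k + k')%N) bidAt R L i else 0) +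
  \sum_(i < size L) eu L i (nth (tx0 R) L i).
Proof.
rewrite /exp_util /realized_util big_split /= sumr_const.
set N := #|conf_sets _ _|.
have N0 : (N%:R : R) != 0 by rewrite pnatr_eq0 -lt0n N_gt0.
rewrite mulrDl; congr (_ + _).
  by rewrite -[_ *+ N]mulr_natr mulfK.
rewrite exchange_big /= mulr_suml; apply: eq_bigr => i _.
set t := nth _ L i.
under eq_bigr => S _ do rewrite tx_util_split.
rewrite (@sum_if _ (fun S : {set 'I_k} => [exists s in S, nat_of_ord s == i])).
rewrite /eu.
case: ltnP => hi.
  rewrite cnt_lt // -mulr_natr; field; done.
rewrite cnt_ge // mul0r addr0 -mulr_natr; field; done.
Qed.

Hypothesis k'0 : (0 < k')%N.

Lemma pr_ge0 : 0 <= pr.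
Proof. by rewrite /pr divr_ge0 ?ler0n. Qed.
Lemma pr_le1 : pr <= 1.
Proof.
rewrite /pr ler_pdivrMr ?mul1r ?ler_nat //.
by rewrite ltr0n.
Qed.

Definition honest_av (vs os : seq R) := others_txs R os ++ player_txs R vs vs [::].

Lemma honest_shape vs os t : all_nonneg R vs -> all_nonneg R os ->
  t \in honest_av vs os -> 0 <= t.1 /\ (t.2 = None \/ t.2 = Some t.1).
Proof.
move=> nv no; rewrite mem_cat => /orP [].
  by case/mapP => b bo ->; split; [exact: no | left].
rewrite /player_txs cats0 zip_same -map_comp => /mapP [v vv ->] /=.
by split; [exact: nv | right].
Qed.

Lemma perm_mem2 (I L rest av : seq (tx R)) t : perm_eq L I -> perm_eq (I ++ rest) av ->
  t \in L -> t \in av.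
Proof. by move=> p1 p2 tL; rewrite -(perm_mem p2) mem_cat -(perm_mem p1) tL. Qed.

Lemma honest_lb miner vs os I L :
  all_nonneg R vs -> all_nonneg R os ->
  honest_inclusion R (k + k') (honest_av vs os) I -> arrangement R I L ->
  (if miner then g * \sum_(k <= i < (k + k')%N) bidAt R L i else 0) +
  pr * \sum_(v <- vs) Num.max (v - bidAt R L k) 0 <= exp_util R miner c k k' g L.
Proof.
move=> nv no [rest [prm [sz sep]]] arr.
have [pL so] := arr.
set X := bidAt R L k.
set hX := fun t : tx R => match t.2 with None => 0 | Some v => Num.max (v - X) 0 end.
have memav : forall t, t \in L -> t \in honest_av vs os by move=> t; apply: perm_mem2 pL prm.
have nnL : forall t, t \in L -> 0 <= bidOf R t.
  by move=> t /memav /(@honest_shape vs os t nv no) [].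
rewrite exp_utilE lerD //.
have e1 : \sum_(i < size L) eu L i (nth (tx0 R) L i) = pr * \sum_(t <- L) hX t.
  have -> : \sum_(i < size L) eu L i (nth (tx0 R) L i) =
            \sum_(0 <= i < size L) eu L i (nth (tx0 R) L i) by rewrite big_mkord.
  rewrite (big_nth (tx0 R)) mulr_sumr big_seq_cond [RHS]big_seq_cond.
  apply: eq_bigr => i /andP [] ; rewrite mem_index_iota => /andP [_ hi] _.
  set t := nth _ L i.
  have [t0 ts] := @honest_shape vs os _ nv no (memav t (mem_nth (tx0 R) hi)).
  rewrite /eu /tx_util /hX -/t; case: ts => ->; first by case: ifP => _; rewrite ?mulr0 ?addr0.
  rewrite ltxx.
  have bi : bidAt R L i = t.1 by rewrite (bidAt_nth _ _ hi).
  case: ltnP => ik.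
    have : X <= t.1 by rewrite -bi /X; exact: (arr_mono arr nnL _ _ (ltnW ik)).
    rewrite -subr_ge0 => h; rewrite (max_idPl h) mulr0 addr0 //.
  have : t.1 <= X by rewrite -bi /X; apply: (arr_mono arr nnL).
  by rewrite -subr_le0 => h; rewrite (max_idPr h) mulr0.
rewrite e1; apply: ler_wpM2l; first exact: pr_ge0.
have erest : \sum_(t <- rest) hX t = 0.
  have [->|rne] := eqVneq rest [::]; first by rewrite big_nil.
  have szI := incl_full _ _ _ _ prm sz rne.
  have kL : (k < size L)%N by rewrite (perm_size pL) szI -{1}(addn0 k) ltn_add2l.
  apply: big1_seq => r /andP [_ rr].
  have rav : r \in honest_av vs os by rewrite -(perm_mem prm) mem_cat rr orbT.
  have [r0 rs] := @honest_shape vs os r nv no rav.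
  rewrite /hX; case: rs => -> //.
  have : r.1 <= X.
    rewrite /X (bidAt_nth _ _ kL); apply: (sep _ _ _ rr).
    by rewrite -(perm_mem pL); apply: mem_nth.
  by rewrite -subr_le0 => h; rewrite (max_idPr h).
have : \sum_(t <- honest_av vs os) hX t = \sum_(t <- L) hX t.
  by rewrite -(perm_big _ prm) big_cat /= erest addr0 (perm_big _ pL).
have eo : \sum_(b <- os) hX (b, None) = 0 by apply: big1.
move=> <-; rewrite /honest_av big_cat /= sum_others eo add0r sum_player big_nil addr0.
by rewrite (sum_zip1 (fun v => Num.max (v - X) 0)).
Qed.

Hypothesis g0 : 0 <= g.
Hypothesis g1 : g <= 1.

Definition phi (x w : R) := Num.min x w.
Definition hx (x : R) (t : tx R) : R :=
  match t.2 with None => 0 | Some v => Num.max (v - x) 0 end.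

Lemma term_bound (L' : seq (tx R)) i :
  (i < size L')%N -> 0 <= bidAt R L' k ->
  ((i < k)%N -> bidAt R L' k <= bidAt R L' i) ->
  ((k <= i)%N -> bidAt R L' i <= bidAt R L' k) ->
  g * (if (k <= i < k + k')%N then bidAt R L' i else 0) + eu L' i (nth (tx0 R) L' i) <=
  g * (if (i < k + k')%N then phi (bidAt R L' k) (val (nth (tx0 R) L' i)) else 0)
  - g * (if (i < k)%N then bidAt R L' k else 0)
  + pr * (if (i < k)%N then hx (bidAt R L' k) (nth (tx0 R) L' i) else 0).
Proof.
move=> hi x0 hlt hge.
rewrite (bidAt_nth _ _ hi) /bidOf in hlt hge *.
set x := bidAt R L' k in x0 hlt hge *.
set t := nth _ L' i in hlt hge *.
have p0 := pr_ge0; have p1 := pr_le1.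
rewrite /eu /tx_util /hx /phi /val -/x /bidOf.
case: t.2 => [v|]; case: (ltnP i k) => ik /=.
- have -> : (i < k + k')%N by apply: ltn_addr.
  have xt := hlt ik.
  case: (leP x v) => xv.
    rewrite (max_idPl _) ?subr_ge0 //; case: ifP => vt; last by nra.
    have : 0 <= (1 - pr) * (g * (t.1 - v)) by rewrite !mulr_ge0 // ?subr_ge0 // ltW.
    nra.
  have vt : v < t.1 by apply: lt_le_trans xt.
  rewrite vt (max_idPr _); last by rewrite subr_le0 ltW.
  have h1 : 0 <= (1 - pr) * g * (t.1 - x).
    by apply: mulr_ge0; [apply: mulr_ge0 => //; rewrite subr_ge0 | rewrite subr_ge0].
  have h2 : 0 <= pr * (1 - g) * (x - v).
    by apply: mulr_ge0; [apply: mulr_ge0 => //; rewrite subr_ge0 | rewrite subr_ge0 ltW].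
  nra.
- have xt := hge ik.
  case: ltnP => ik2 /=.
    case: (leP x v) => xv; case: ifP => vt.
    + by have := lt_le_trans vt (le_trans xt xv); rewrite ltxx.
    + have : 0 <= g * (x - t.1) by rewrite mulr_ge0 // subr_ge0.
      nra.
    + nra.
    + have : 0 <= g * (v - t.1) by rewrite mulr_ge0 // subr_ge0 leNgt vt.
      nra.
  case: ifP => vt; try nra.
  have : 0 <= g * (t.1 - v) by rewrite mulr_ge0 // subr_ge0 ltW.
  nra.
- have -> : (i < k + k')%N by apply: ltn_addr.
  have xt := hlt ik.
  rewrite (min_idPl xt); nra.
- have xt := hge ik.
  case: ltnP => ik2 /=; last by nra.
  rewrite (min_idPr xt); nra.
Qed.

Lemma phi_le_x x w : phi x w <= x.
Proof. by rewrite /phi ge_min lexx. Qed.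
Lemma phi_le_w x w : phi x w <= w.
Proof. by rewrite /phi ge_min lexx orbT. Qed.
Lemma phi_ge0 x w : 0 <= x -> 0 <= w -> 0 <= phi x w.
Proof. by move=> h1 h2; rewrite /phi le_min h1 h2. Qed.
Lemma phi_mono x a b : a <= b -> phi x a <= phi x b.
Proof. by move=> h; rewrite /phi le_min2. Qed.
Lemma phi_0 x : 0 <= x -> phi x 0 = 0.
Proof. by move=> h; rewrite /phi; apply/min_idPr. Qed.

Lemma sum_cut (f : nat -> R) n a :
  \sum_(0 <= i < n) (if (i < a)%N then f i else 0) = \sum_(0 <= i < minn n a) f i.
Proof.
case: (leqP n a) => h.
  rewrite big_seq_cond [RHS]big_seq_cond; apply: eq_bigr => i.
  by rewrite andbT mem_index_iota => /andP [_ hi]; rewrite (leq_trans hi h).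
have h' := ltnW h; rewrite (big_cat_nat (leq0n a) h') /=.
rewrite [X in _ + X]big1_seq ?addr0.
  rewrite big_seq_cond [RHS]big_seq_cond; apply: eq_bigr => i.
  by rewrite andbT mem_index_iota => /andP [_ ->].
by move=> i; rewrite mem_index_iota => /andP [_ /andP [hi _]]; rewrite ltnNge hi.
Qed.

Lemma sum_prefix (f : nat -> R) a b : (a <= b)%N ->
  (forall i, (a <= i)%N -> (i < b)%N -> 0 <= f i) ->
  \sum_(0 <= i < a) f i <= \sum_(0 <= i < b) f i.
Proof.
move=> ab h; rewrite (big_cat_nat (leq0n a) ab) /= lerDl big_seq.
by apply: sumr_ge0 => i; rewrite mem_index_iota => /andP [h1 h2]; apply: h.
Qed.

Lemma dev_shape vs os bs fs t : all_nonneg R os -> all_nonneg R bs -> all_nonneg R fs ->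
  size bs = size vs ->
  t \in others_txs R os ++ player_txs R vs bs fs -> 0 <= t.1.
Proof.
move=> no nb nf sz; rewrite mem_cat => /orP [].
  by case/mapP => b bo ->; exact: no.
rewrite mem_cat => /orP [].
  by case/mapP => p pz -> /=; exact: (nb _ (mem_zip2 _ _ _ _ _ (esym sz) pz)).
by case/mapP => f ff -> /=; apply: nf.
Qed.

Lemma rev_bound vs os bs fs I L I' L' rest' :
  all_nonneg R vs -> all_nonneg R os -> all_nonneg R bs -> all_nonneg R fs ->
  size bs = size vs ->
  honest_inclusion R (k + k') (honest_av vs os) I -> arrangement R I L ->
  perm_eq (I' ++ rest') (others_txs R os ++ player_txs R vs bs fs) -> perm_eq L' I' ->
  0 <= bidAt R L' k ->
  \sum_(0 <= i < size L') (if (i < k + k')%N then phi (bidAt R L' k) (val (nth (tx0 R) L' i)) else 0)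
  <= \sum_(0 <= i < size L') (if (i < k)%N then bidAt R L' k else 0) +
     \sum_(k <= j < k + k') phi (bidAt R L' k) (bidAt R L j).
Proof.
move=> nv no nb nf szb [rest [prm [sz sep]]] arr prm' pL' x0.
set x := bidAt R L' k in x0 *.
have [pL so] := arr.
have memav : forall t, t \in L -> t \in honest_av vs os by move=> t; apply: perm_mem2 pL prm.
have nnL : forall t, t \in L -> 0 <= bidOf R t.
  by move=> t /memav /(@honest_shape vs os t nv no) [].
set w := bidAt R L.
have w0 : forall j, 0 <= w j.
  move=> j; rewrite /w; case: (ltnP j (size L)) => hj; last by rewrite bidAt_default.
  by rewrite (bidAt_nth _ _ hj); apply: nnL; apply: mem_nth.
rewrite !sum_cut.
set M := minn (size L') (k + k').
have MB : (M <= k + k')%N by rewrite geq_minr.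
have Mn : (M <= size L')%N by rewrite geq_minl.
have topM : \sum_(0 <= i < M) phi x (val (nth (tx0 R) L' i)) <= \sum_(0 <= j < M) phi x (w j).
  case: M MB Mn => [|M1] MB Mn; first by rewrite !big_geq.
  set y := phi x (w M1).
  have y0 : 0 <= y by apply: phi_ge0.
  pose G := fun t : tx R => Num.max (phi x (val t) - y) 0.
  have G0 : forall t, 0 <= G t by move=> t; rewrite /G le_max lexx orbT.
  have s1 : \sum_(0 <= i < M1.+1) phi x (val (nth (tx0 R) L' i)) <=
            \sum_(0 <= i < M1.+1) (y + G (nth (tx0 R) L' i)).
    apply: ler_sum => i _; rewrite /G -lerBlDl le_max lexx //.
  apply: (le_trans s1); rewrite big_split /= sumr_const_nat.
  have s2 : \sum_(0 <= i < M1.+1) G (nth (tx0 R) L' i) <= \sum_(t <- honest_av vs os) G t.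
    apply: (@le_trans _ _ (\sum_(0 <= i < size L') G (nth (tx0 R) L' i))).
      by apply: sum_prefix => // i _ _.
    have -> : \sum_(0 <= i < size L') G (nth (tx0 R) L' i) = \sum_(t <- L') G t.
      by rewrite [RHS](big_nth (tx0 R)).
    rewrite (perm_big _ pL').
    apply: (@le_trans _ _ (\sum_(t <- others_txs R os ++ player_txs R vs bs fs) G t)).
      by apply: (sum_sub _ _ _ _ prm') => t _.
    rewrite /honest_av big_cat sum_player [X in _ <= X]big_cat sum_player /=.
    rewrite /G /val /= !(sum_zip1 (fun v => Num.max (phi x v - y) 0)) //.
    rewrite [X in _ + (_ + X) <= _]big1 ?addr0.
      by rewrite big_nil addr0.
    by move=> f _; rewrite phi_0 // sub0r; apply/max_idPr; rewrite oppr_le0.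
  have s3 : \sum_(t <- honest_av vs os) G t = \sum_(0 <= j < size L) Num.max (phi x (w j) - y) 0.
    have erest : \sum_(t <- rest) G t = 0.
      have [->|rne] := eqVneq rest [::]; first by rewrite big_nil.
      have szI := incl_full _ _ _ _ prm sz rne.
      have ML : (M1 < size L)%N by rewrite (perm_size pL) szI.
      apply: big1_seq => r /andP [_ rr].
      have rav : r \in honest_av vs os by rewrite -(perm_mem prm) mem_cat rr orbT.
      have [r0 rs] := @honest_shape vs os r nv no rav.
      have vr : val r = r.1 by rewrite /val; case: rs => ->.
      have : phi x (val r) <= y.
        rewrite vr /y; apply: phi_mono; rewrite /w (bidAt_nth _ _ ML); apply: (sep _ _ _ rr).
        by rewrite -(perm_mem pL); apply: mem_nth.
      by rewrite -subr_le0 => h; rewrite /G (max_idPr h).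
    rewrite -(perm_big _ prm) big_cat /= erest addr0 -(perm_big _ pL) (big_nth (tx0 R)).
    rewrite big_seq [RHS]big_seq; apply: eq_bigr => j; rewrite mem_index_iota => /andP [_ hj].
    have [_ ts] := @honest_shape vs os _ nv no (memav _ (mem_nth (tx0 R) hj)).
    rewrite /G /w (bidAt_nth _ _ hj) /bidOf; congr (Num.max (phi x _ - y) 0).
    by rewrite /val; case: ts => ->.
  have s4 : \sum_(0 <= j < size L) Num.max (phi x (w j) - y) 0 =
            \sum_(0 <= j < M1.+1) (phi x (w j) - y).
    rewrite (sum_pad (fun j => Num.max (phi x (w j) - y) 0) (size L) M1.+1); last first.
      move=> j hj; rewrite /w bidAt_default // phi_0 // sub0r; apply/max_idPr.
      by rewrite oppr_le0.
    rewrite addnC (big_cat_nat (leq0n M1.+1) (leq_addr _ _)) /=.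
    rewrite [X in _ + X]big1_seq ?addr0.
      apply: eq_big_seq => j; rewrite mem_index_iota => /andP [_ hj].
      apply/max_idPl; rewrite subr_ge0; apply: phi_mono.
      by apply: (arr_mono arr nnL).
    move=> j /andP [_]; rewrite mem_index_iota => /andP [hj _].
    apply/max_idPr; rewrite subr_le0; apply: phi_mono.
    by apply: (arr_mono arr nnL); apply: ltnW.
  have e5 : \sum_(0 <= j < M1.+1) phi x (w j) =
            y *+ (M1.+1 - 0) + \sum_(0 <= j < M1.+1) (phi x (w j) - y).
    by rewrite big_split /= sumr_const_nat mulNrn addrCA subrr addr0.
  by rewrite e5 lerD2l -s4 -s3.
apply: (le_trans topM).
have eM : minn M k = minn (size L') k.
  rewrite /M -minnA; congr minn; apply/minn_idPr; exact: leq_addr.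
rewrite (big_cat_nat (leq0n (minn M k)) (geq_minl M k)) /= eM.
apply: lerD.
  by apply: ler_sum => j _; apply: phi_le_x.
have ph0 : forall j, 0 <= phi x (w j) by move=> j; apply: phi_ge0.
case: (leqP M k) => hMk.
  rewrite -eM (minn_idPl hMk) big_geq // big_seq; apply: sumr_ge0 => j _; exact: ph0.
rewrite -eM (minn_idPr (ltnW hMk)).
rewrite [X in _ <= X](big_cat_nat (ltnW hMk) MB) /= lerDl big_seq.
by apply: sumr_ge0 => j _; exact: ph0.
Qed.

Lemma max_tri (v x X : R) : Num.max (v - x) 0 <= Num.max (v - X) 0 + Num.max (X - x) 0.
Proof.
have h1 : v - X <= Num.max (v - X) 0 by rewrite le_max lexx.
have h2 : X - x <= Num.max (X - x) 0 by rewrite le_max lexx.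
have h3 : 0 <= Num.max (v - X) 0 by rewrite le_max lexx orbT.
have h4 : 0 <= Num.max (X - x) 0 by rewrite le_max lexx orbT.
rewrite ge_max; apply/andP; split; lra.
Qed.

Lemma phi_X (x X : R) : phi x X <= X - Num.max (X - x) 0.
Proof.
rewrite /phi; case: (leP x X) => h.
  by rewrite (max_idPl _) ?subr_ge0 // opprB addrCA subrr addr0.
by rewrite (max_idPr _) ?subr0 // subr_le0 ltW.
Qed.

Lemma sum_cseq (s : seq R) (d : R) : \sum_(v <- s) d = d *+ size s.
Proof. by elim: s => [|a s IH]; rewrite ?big_nil ?big_cons ?IH ?mulrS. Qed.

Hypothesis pc : pr * c%:R <= g.

Lemma scp_dev vs os bs fs I L I' L' :
  (size vs <= c)%N -> all_nonneg R vs -> all_nonneg R os -> all_nonneg R bs ->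
  all_nonneg R fs -> size bs = size vs ->
  honest_inclusion R (k + k') (honest_av vs os) I -> arrangement R I L ->
  valid_block R (k + k') (others_txs R os ++ player_txs R vs bs fs) I' -> arrangement R I' L' ->
  exp_util R true c k k' g L' <= exp_util R true c k k' g L.
Proof.
move=> hc nv no nb nf szb hinc arr [rest' [prm' _]] arr'.
have [pL' so'] := arr'.
have nn' : forall t, t \in L' -> 0 <= bidOf R t.
  move=> t tL; apply: (@dev_shape vs os bs fs t no nb nf szb).
  by rewrite -(perm_mem prm') mem_cat -(perm_mem pL') tL.
set x := bidAt R L' k.
have x0 : 0 <= x.
  rewrite /x; case: (ltnP k (size L')) => hk; last by rewrite bidAt_default.
  by rewrite (bidAt_nth _ _ hk); apply: nn'; apply: mem_nth.
set X := bidAt R L k.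
apply: (le_trans _ (honest_lb true _ _ _ _ nv no hinc arr)) => /=.
rewrite exp_utilE /=.
set n' := size L'.
have eA : \sum_(k <= i < k + k') bidAt R L' i =
          \sum_(0 <= i < n') (if (k <= i < k + k')%N then bidAt R L' i else 0).
  rewrite (sum_range _ _ _ (n' + (k + k'))) ?leq_addl //.
  rewrite -(sum_pad (fun i => if (k <= i < k + k')%N then bidAt R L' i else 0) n' (k + k')) //.
  by move=> i hi; rewrite bidAt_default //; case: ifP.
have eB : \sum_(i < n') eu L' i (nth (tx0 R) L' i) = \sum_(0 <= i < n') eu L' i (nth (tx0 R) L' i).
  by rewrite big_mkord.
rewrite eA eB mulr_sumr -big_split /=.
pose F i := g * (if (i < k + k')%N then phi x (val (nth (tx0 R) L' i)) else 0)
  - g * (if (i < k)%N then x else 0)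
  + pr * (if (i < k)%N then hx x (nth (tx0 R) L' i) else 0).
apply: (@le_trans _ _ (\sum_(0 <= i < n') F i)).
  rewrite big_seq [X in _ <= X]big_seq; apply: ler_sum => i; rewrite mem_index_iota => /andP [_ hi].
  apply: term_bound => //.
    by move=> ik; apply: (arr_mono arr' nn'); apply: ltnW.
  by move=> ik; apply: (arr_mono arr' nn').
rewrite /F big_split big_split /= sumrN -!mulr_sumr.
have hR := rev_bound _ _ _ _ _ _ _ _ _ nv no nb nf szb hinc arr prm' pL' x0.
rewrite -/x -/n' in hR.
set D := Num.max (X - x) 0.
have D0 : 0 <= D by rewrite le_max lexx orbT.
have hF : \sum_(k <= j < k + k') phi x (bidAt R L j) <= \sum_(k <= j < k + k') bidAt R L j - D.
  have kk : (k < k + k')%N by rewrite -{1}(addn0 k) ltn_add2l.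
  rewrite !(big_ltn kk) -/X.
  have := phi_X x X; rewrite -/D => h1.
  have h2 : \sum_(k.+1 <= j < k + k') phi x (bidAt R L j) <= \sum_(k.+1 <= j < k + k') bidAt R L j.
    by apply: ler_sum => j _; apply: phi_le_w.
  lra.
have hG : \sum_(0 <= i < n') (if (i < k)%N then hx x (nth (tx0 R) L' i) else 0)
          <= \sum_(v <- vs) Num.max (v - X) 0 + c%:R * D.
  have hx0 : forall t, 0 <= hx x t by move=> t; rewrite /hx; case: t.2 => [v|] //; rewrite le_max lexx orbT.
  apply: (@le_trans _ _ (\sum_(0 <= i < n') hx x (nth (tx0 R) L' i))).
    by apply: ler_sum => i _; case: ifP.
  have -> : \sum_(0 <= i < n') hx x (nth (tx0 R) L' i) = \sum_(t <- L') hx x t.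
    by rewrite [RHS](big_nth (tx0 R)).
  rewrite (perm_big _ pL').
  apply: (le_trans (sum_sub _ _ _ _ prm' (fun t _ => hx0 t))).
  rewrite big_cat sum_player sum_others /= big1 ?add0r //.
  rewrite [X in _ + X <= _]big1 ?addr0; last first.
    by move=> f _; rewrite /hx /= sub0r; apply/max_idPr; rewrite oppr_le0.
  rewrite /hx /= (sum_zip1 (fun v => Num.max (v - x) 0)) //.
  apply: (@le_trans _ _ (\sum_(v <- vs) (Num.max (v - X) 0 + D))).
    by apply: ler_sum => v _; apply: max_tri.
  rewrite big_split /= sum_cseq lerD2l -[D *+ _]mulr_natl.
  by apply: ler_wpM2r => //; rewrite ler_nat.
have p0 := pr_ge0.
have e1 : g * \sum_(0 <= i < n') (if (i < k + k')%N then phi x (val (nth (tx0 R) L' i)) else 0)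
   <= g * (\sum_(0 <= i < n') (if (i < k)%N then x else 0) + (\sum_(k <= j < k + k') bidAt R L j - D)).
  apply: ler_wpM2l => //; apply: (le_trans hR); rewrite lerD2l //.
have e2 : pr * \sum_(0 <= i < n') (if (i < k)%N then hx x (nth (tx0 R) L' i) else 0)
   <= pr * (\sum_(v <- vs) Num.max (v - X) 0 + c%:R * D).
  by apply: ler_wpM2l.
have e3 : pr * (c%:R * D) <= g * D by rewrite mulrA; apply: ler_wpM2r.
lra.
Qed.

Definition bigT (x : R) (t : tx R) : bool :=
  match t.2 with Some v => x < v | None => false end.

Lemma count_lemma os v b fs I L I' L' :
  all_nonneg R os -> 0 <= v -> 0 <= b -> all_nonneg R fs ->
  honest_inclusion R (k + k') (honest_av [:: v] os) I -> arrangement R I L ->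
  honest_inclusion R (k + k') (others_txs R os ++ player_txs R [:: v] [:: b] fs) I' ->
  arrangement R I' L' ->
  has (bigT (bidAt R L' k)) (take k L') -> bidAt R L k <= bidAt R L' k.
Proof.
move=> no v0 b0 nf [rest [prm [sz sep]]] arr [rest' [prm' [sz' sep']]] arr' hb.
have [pL so] := arr; have [pL' so'] := arr'.
have nv : all_nonneg R [:: v] by move=> z; rewrite inE => /eqP ->.
have nb : all_nonneg R [:: b] by move=> z; rewrite inE => /eqP ->.
have nnL : forall t, t \in L -> 0 <= bidOf R t.
  by move=> t /(perm_mem2 _ _ _ _ _ pL prm) /(@honest_shape [:: v] os t nv no) [].
have nn' : forall t, t \in L' -> 0 <= bidOf R t.
  move=> t tL; apply: (@dev_shape [:: v] os [:: b] fs t no nb nf erefl).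
  by rewrite -(perm_mem prm') mem_cat -(perm_mem pL') tL.
set x := bidAt R L' k; set X := bidAt R L k.
have x0 : 0 <= x.
  rewrite /x; case: (ltnP k (size L')) => hk; last by rewrite bidAt_default.
  by rewrite (bidAt_nth _ _ hk); apply: nn'; apply: mem_nth.
rewrite leNgt; apply/negP => xX.
have hn : (k < size L)%N.
  rewrite ltnNge; apply/negP => h; move: xX; rewrite /X bidAt_default //.
  by rewrite ltNge x0.
pose P := fun t : tx R => X <= bidOf R t.
have cL : (k.+1 <= count P L)%N.
  rewrite -(cat_take_drop k.+1 L) count_cat.
  have : all P (take k.+1 L).
    apply/allP => t /(nthP (tx0 R)) [j hj <-].
    have jk : (j < k.+1)%N by move: hj; rewrite size_takel.
    rewrite nth_take // /P /X -(bidAt_nth _ _ (leq_ltn_trans _ hn)) //.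
    exact: (arr_mono arr nnL).
  rewrite all_count => /eqP ->; rewrite size_takel //; exact: leq_addr.
have cav : (count P L <= count P (others_txs R os) + 1)%N.
  rewrite ((seq.permP pL) P).
  have := (seq.permP prm) P; rewrite count_cat => e.
  apply: (leq_trans (leq_addr (count P rest) _)); rewrite e /honest_av count_cat leq_add2l.
  by rewrite /player_txs /= addn0; case: (P _).
pose Q := fun t : tx R => (t.2 == None) && (x < bidOf R t).
have cQo : (k <= count Q (others_txs R os))%N.
  have : (k <= count P (others_txs R os))%N by rewrite -(leq_add2r 1) addn1; exact: leq_trans cL cav.
  move/leq_trans; apply; rewrite /others_txs !count_map; apply: sub_count => z.
  by rewrite /preim /P /Q /= => h; apply: lt_le_trans xX h.
have cQr : count Q rest' = 0%N.
  have [->|rne] := eqVneq rest' [::]; first by [].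
  have szI := incl_full _ _ _ _ prm' sz' rne.
  have kL : (k < size L')%N by rewrite (perm_size pL') szI -{1}(addn0 k) ltn_add2l.
  apply/eqP; rewrite -leqn0 leqNgt -has_count; apply/hasPn => r rr.
  rewrite /Q negb_and; apply/orP; right; rewrite -leNgt.
  rewrite /x (bidAt_nth _ _ kL); apply: (sep' _ _ _ rr).
  by rewrite -(perm_mem pL'); apply: mem_nth.
have cQL : (k <= count Q L')%N.
  have := (seq.permP prm') Q; rewrite !count_cat cQr addn0 -((seq.permP pL') Q) => ->.
  exact: leq_trans cQo (leq_addr _ _).
have cQd : count Q (drop k L') = 0%N.
  apply/eqP; rewrite -leqn0 leqNgt -has_count; apply/hasPn => t /(nthP (tx0 R)) [j hj <-].
  rewrite nth_drop /Q negb_and; apply/orP; right; rewrite -leNgt.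
  have hj' : (k + j < size L')%N by move: hj; rewrite size_drop ltn_subRL.
  rewrite -(bidAt_nth _ _ hj') /x; apply: (arr_mono arr' nn'); exact: leq_addr.
have cQt : (k <= count Q (take k L'))%N.
  by move: cQL; rewrite -{1}(cat_take_drop k L') count_cat cQd addn0.
have hC : has (predC Q) (take k L').
  apply: (sub_has _ hb) => t; rewrite /bigT /= /Q; by case: t.2.
move: hC; rewrite has_count => hC.
have := count_predC Q (take k L'); rewrite size_take_min => e.
have : (k + 1 <= minn k (size L'))%N by rewrite -e; apply: leq_add.
by rewrite addn1 ltnNge geq_minl.
Qed.

Lemma term_bound_u (L' : seq (tx R)) i t :
  eu L' i t <= pr * (if (i < k)%N then hx (bidAt R L' k) t else 0).
Proof.
have p0 := pr_ge0; have p1 := pr_le1.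
rewrite /eu /tx_util /hx; case: t.2 => [v|]; last by case: ifP => _; rewrite !mulr0 ?addr0.
have pen : (if v < t.1 then - (g * (t.1 - v)) else 0) <= 0.
  case: ifP => // h; rewrite oppr_le0 mulr_ge0 // subr_ge0 ltW //.
case: ifP => ik; last by rewrite mulr0.
have h1 : (1 - pr) * (if v < t.1 then - (g * (t.1 - v)) else 0) <= 0.
  by rewrite mulr_ge0_le0 // subr_ge0.
have h2 : v - bidAt R L' k <= Num.max (v - bidAt R L' k) 0 by rewrite le_max lexx.
have h3 := ler_wpM2l p0 h2.
lra.
Qed.

Lemma uic_dev os v b fs I L I' L' :
  all_nonneg R os -> 0 <= v -> 0 <= b -> all_nonneg R fs ->
  honest_inclusion R (k + k') (honest_av [:: v] os) I -> arrangement R I L ->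
  honest_inclusion R (k + k') (others_txs R os ++ player_txs R [:: v] [:: b] fs) I' ->
  arrangement R I' L' ->
  exp_util R false c k k' g L' <= exp_util R false c k k' g L.
Proof.
move=> no v0 b0 nf hinc arr hinc' arr'.
have nv : all_nonneg R [:: v] by move=> z; rewrite inE => /eqP ->.
apply: (le_trans _ (honest_lb false _ _ _ _ nv no hinc arr)) => /=.
rewrite exp_utilE /= !add0r big_cons big_nil addr0.
have p0 := pr_ge0.
set x := bidAt R L' k; set X := bidAt R L k.
apply: (@le_trans _ _ (\sum_(i < size L') pr * (if (i < k)%N then hx x (nth (tx0 R) L' i) else 0))).
  by apply: ler_sum => i _; apply: term_bound_u.
rewrite -mulr_sumr; apply: ler_wpM2l => //.
have hx0 : forall t, 0 <= hx x t by move=> t; rewrite /hx; case: t.2 => [w|] //; rewrite le_max lexx orbT.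
case hb: (has (bigT x) (take k L')); last first.
  have m0 : 0 <= Num.max (v - X) 0 by rewrite le_max lexx orbT.
  rewrite big1 // => i _; case: ifP => // ik.
  have : nth (tx0 R) L' i \in take k L'.
    by rewrite -(nth_take (tx0 R) ik); apply: mem_nth; rewrite size_take_min leq_min ik ltn_ord.
  move/hasPn: (negbT hb) => H /H; rewrite /bigT /hx; case: (nth _ L' i).2 => [w|] //.
  by rewrite -leNgt -subr_le0 => h; apply/max_idPr.
have xX := count_lemma _ _ _ _ _ _ _ _ no v0 b0 nf hinc arr hinc' arr' hb.
rewrite -/x -/X in xX.
have [rest' [prm' _]] := hinc'; have [pL' _] := arr'.
have nb : all_nonneg R [:: b] by move=> z; rewrite inE => /eqP ->.
have nn' : forall t, t \in L' -> 0 <= bidOf R t.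
  move=> t tL; apply: (@dev_shape [:: v] os [:: b] fs t no nb nf erefl).
  by rewrite -(perm_mem prm') mem_cat -(perm_mem pL') tL.
have x0 : 0 <= x.
  rewrite /x; case: (ltnP k (size L')) => hk; last by rewrite bidAt_default.
  by rewrite (bidAt_nth _ _ hk); apply: nn'; apply: mem_nth.
apply: (@le_trans _ _ (\sum_(i < size L') hx x (nth (tx0 R) L' i))).
  by apply: ler_sum => i _; case: ifP.
have -> : \sum_(i < size L') hx x (nth (tx0 R) L' i) = \sum_(t <- L') hx x t.
  by rewrite [RHS](big_nth (tx0 R)) big_mkord.
rewrite (perm_big _ pL').
apply: (le_trans (sum_sub _ _ _ _ prm' (fun t _ => hx0 t))).
rewrite big_cat sum_player sum_others /= big1 ?add0r //.
rewrite [X in _ + X <= _]big1 ?addr0; last first.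
  by move=> f _; rewrite /hx /= sub0r; apply/max_idPr; rewrite oppr_le0.
rewrite /hx /= big_cons big_nil addr0 /=.
apply: le_max2 => //; lra.
Qed.
End S.

Theorem mainTheorem3 (R : realType) (B c k k' : nat) (g : R) :
  (1 <= c)%N -> 0 < g -> g <= 1 -> (0 < k)%N -> (0 < k')%N -> (k + k')%N = B ->
  (k' <= nconf R c k g)%N ->
  UIC R B c k k' g /\ MIC R B c k k' g /\ SCP R B c k k' g.
Proof.
move=> c1 g0' g1 k0 k'0 <- _.
have g0 := ltW g0'.
have c0 : (0 : R) < c%:R by rewrite ltr0n.
have kr0 : (0 : R) < k%:R by rewrite ltr0n.
set y := g * k%:R / c%:R.
have y0 : 0 <= y by rewrite /y divr_ge0 // mulr_ge0.
have my : (nconf R c k g)%:R <= y by rewrite /nconf truncn_le.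
have yk : y <= k%:R.
  rewrite /y ler_pdivrMr //; have c1' : 1 <= (c%:R : R) by rewrite ler1n.
  nra.
have mk : (nconf R c k g <= k)%N by rewrite -(ler_nat R); exact: le_trans my yk.
have pc : pr R c k g * c%:R <= g.
  rewrite /pr mulrAC ler_pdivrMr //.
  by move: my; rewrite /y ler_pdivlMr.
split; [|split].
- move=> os v b fs no v0 b0 nf I L I' L' h1 h2 h3 h4.
  exact: (uic_dev _ _ _ _ _ k0 mk k'0 g0 _ _ _ _ _ _ _ _ no v0 b0 nf h1 h2 h3 h4).
- move=> os fs no nf I L I' L' h1 h2 h3 h4.
  have e : honest_av R [::] os = others_txs R os by rewrite /honest_av /player_txs /= cats0.
  have nv : all_nonneg R [::] by [].
  apply: (scp_dev _ _ _ _ _ k0 mk k'0 g0 g1 pc [::] os [::] fs I L I' L' _ nv no nv nf erefl _ h2 h3 h4) => //.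
  by rewrite e.
- move=> vs os bs fs /andP [_ hc] nv no szb nb nf I L I' L' h1 h2 h3 h4.
  exact: (scp_dev _ _ _ _ _ k0 mk k'0 g0 g1 pc _ _ _ _ _ _ _ _ hc nv no nb nf szb h1 h2 h3 h4).
Qed.
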